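(* Let $\mathcal{G}=(V,E)$ be a $k$-regular connected hypergraph with $n$ vertices, and let $\theta$ be the second largest eigenvalue of $A_{\mathcal{G}}$ in absolute value (i.e. $\theta=\max_{l\ge2}|\lambda_l|$ where $\lambda_1\ge\dots\ge\lambda_n$ are the eigenvalues of $A_{\mathcal{G}}$). Then $$\operatorname{diam}(\mathcal{G})\le\left\lfloor 1+\frac{\log(n-1)}{\log(k/\theta)}\right\rfloor.$$
   Context: A hypergraph $\mathcal{G}=(V,E)$ has a finite vertex set $V$ and a set $E$ of subsets of $V$ (edges), each of cardinality at least $2$. The degree $d_i$ of a vertex $i$ is the number of edges containing $i$; $\mathcal{G}$ is $k$-regular if $d_i=k$ for all $i$. The adjacency matrix $A_{\mathcal{G}}$ has $(A_{\mathcal{G}})_{ij}=\sum_{e\in E,\, i,j\in e}\frac{1}{|e|-1}$ for $i\ne j$ and zero diagonal. A path of length $l$ between $v_0$ and $v_l$ is an alternating sequence $v_0e_1v_1\dots e_lv_l$ of distinct vertices and distinct edges with $v_{i-1},v_i\in e_i$; the distance $d(i,j)$ is the minimum length of an $i$–$j$ path, $\operatorname{diam}(\mathcal{G})=\max_{i,j}d(i,j)$; connected means every two vertices are joined by a path. *)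

(* Defs.v *)
From HB Require Import structures.
From mathcomp Require Import all_boot all_order all_algebra.
From mathcomp Require Import all_classical all_reals all_analysis.
Set Implicit Arguments. Unset Strict Implicit. Unset Printing Implicit Defensive.
Import Order.TTheory GRing.Theory Num.Theory.
Local Open Scope ring_scope.

Section Hyper.
Variable n : nat.
Implicit Types (E : {set {set 'I_n}}) (u v : 'I_n).

Definition edges_ok E : Prop := forall e, e \in E -> (2 <= #|e|)%N.

Definition hdegree E (i : 'I_n) : nat := #|[set e in E | i \in e]|.

Definition regular E (k : nat) : Prop := forall i, hdegree E i = k.

Definition hadj (R : numFieldType) E : 'M[R]_n :=
  \matrix_(i, j) (if i == j then 0
                  else \sum_(e in E | (i \in e) && (j \in e)) (#|e|.-1)%:R^-1).

Definition is_path E (l : nat) u v : bool :=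
  [exists vs : (l.+1).-tuple 'I_n, exists es : l.-tuple {set 'I_n},
    [&& uniq vs, uniq es, head u vs == u, last u vs == v,
        all (fun e => e \in E) es &
        [forall i : 'I_l, (nth u vs i \in nth (finset.set0 : {set 'I_n}) es i)
                          && (nth u vs i.+1 \in nth (finset.set0 : {set 'I_n}) es i)]]].

Definition hconnected E : Prop := forall u v, exists l, is_path E l u v.

(* distance: least l such that a path of length l exists (a path has at
   most n vertices, so l < n); defaults to n if there is none *)
Definition hdist E u v : nat := find (fun l => is_path E l u v) (iota 0 n).

Definition hdiam E : nat := \max_(u : 'I_n) \max_(v : 'I_n) hdist E u v.
End Hyper.

(* Main.v *)
Require Import Defs.
From HB Require Import structures.
From mathcomp Require Import all_boot all_order all_algebra.
From mathcomp Require Import all_classical all_reals all_analysis.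
From mathcomp Require Import complex sesquilinear spectral.
From mathcomp Require Import ring lra zify.
Import Order.TTheory GRing.Theory Num.Theory.
Local Open Scope ring_scope.
Set Implicit Arguments. Unset Strict Implicit. Unset Printing Implicit Defensive.
Local Open Scope sesquilinear_scope.

Lemma dup_split (T : eqType) (U : eqType) (f : T -> U) (s : seq T) :
  ~~ uniq (map f s) -> exists p1 a p2 b p3, s = p1 ++ a :: p2 ++ b :: p3 /\ f a = f b.
Proof.
elim: s => [//|c s IH] /=; rewrite negb_and negbK => /orP [/mapP [b bs fcb]|/IH].
  case/splitPr: bs => p2 p3; by exists [::], c, p2, b, p3.
move=> [p1 [a [p2 [b [p3 [-> fab]]]]]]; by exists (c :: p1), a, p2, b, p3.
Qed.

Lemma find_le (T : Type) (a : pred T) (s : seq T) x0 i :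
  (i < size s)%N -> a (nth x0 s i) -> (find a s <= i)%N.
Proof.
elim: s i => [//|y s IH] [|i] /=; first by move=> _ ->.
by move=> Hi Ha; case: (a y) => //; apply: IH.
Qed.

Section Walk.
Variable n : nat.
Variable E : {set {set 'I_n}}.
Local Notation st := ({set 'I_n} * 'I_n)%type.
Definition srel : rel ({set 'I_n} * 'I_n) :=
  fun a b => [&& b.1 \in E, a.2 \in b.1 & b.2 \in b.1].

Lemma path_srel_start (x y : st) q : x.2 = y.2 -> path srel x q = path srel y q.
Proof. by case: q => [//|z q] /= xy; rewrite /srel xy. Qed.

Lemma last_srel (x y : st) q : x.2 = y.2 -> (last x q).2 = (last y q).2.
Proof. by case: q => [//|z q]. Qed.

Lemma path_all (x : st) q : path srel x q -> all (fun e => e \in E) (map fst q).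
Proof. by elim: q x => [//|z q IH] x /= /andP [/and3P [-> _ _] /IH]. Qed.

Lemma is_path_lt l u v : is_path E l u v -> (l < n)%N.
Proof.
case/existsP => vs /existsP [es /and3P [Hu _ _]].
have := max_card (mem vs); rewrite (card_uniqP Hu) size_tuple card_ord.

by [].
Qed.

Lemma hdist_le l u v : is_path E l u v -> (hdist E u v <= l)%N.
Proof.
move=> H; have ln := is_path_lt H; rewrite /hdist.
apply: (@find_le _ _ _ 0%N); first by rewrite size_iota.
by rewrite nth_iota // add0n.
Qed.

Lemma walk_path (p : seq ({set 'I_n} * 'I_n)) u v :
  path srel (finset.set0, u) p -> (last (finset.set0, u) p).2 = v ->
  exists l, (l <= size p)%N /\ is_path E l u v.
Proof.
have [m] := ubnP (size p); elim: m p u => [//|m IH] p u /= Hs Hp Hl.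
case Heu : (uniq (map fst p)); last first.
  have [p1 [a [p2 [b [p3 [pE ab]]]]]] := dup_split (negbT Heu).
  have [|||l [Hl1 Hl2]] := IH (p1 ++ b :: p3) u.
  - by move: Hs; rewrite pE !size_cat /= !size_cat /=; lia.
  - move: Hp; rewrite pE !cat_path /= cat_path /= => /and5P [-> /and3P [_ H1 _] _ /and3P [H2 _ H3] ->].
    by rewrite /srel H2 H3 -ab H1.
  - by move: Hl; rewrite pE !last_cat /= last_cat.
  exists l; split => //; apply: leq_trans Hl1 _.
  by rewrite pE !size_cat /= !size_cat /=; lia.
case Hvu : (uniq (u :: map snd p)).
  exists (size p); split => //.
  have s1 : size (u :: map snd p) == (size p).+1 by rewrite /= size_map.
  have s2 : size (map fst p) == size p by rewrite size_map.
  apply/existsP; exists (Tuple s1); apply/existsP; exists (Tuple s2).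
  apply/andP; split => //; apply/and5P; split => //=.
  + by rewrite -[u]/((finset.set0 : {set 'I_n}, u).2) last_map Hl.
  + exact: path_all Hp.
  + apply/forallP => i; move/pathP: Hp => /(_ (finset.set0, u) i (ltn_ord i)) /and3P [_ H1 H2].
    have -> : nth u (u :: [seq i.2 | i <- p]) i = (nth (finset.set0, u) ((finset.set0, u) :: p) i).2.
      by rewrite -(nth_map (finset.set0, u) u snd) //= ltnS ltnW.
    by rewrite !(nth_map (finset.set0, u)) // H1 H2.
move: Hvu => /= /negbT; rewrite negb_and negbK => /orP [/mapP [b bp ub]|Hd].
  case/splitPr: bp Hp Hl Hs => p1 p3 Hp Hl Hs.
  have [|||l [Hl1 Hl2]] := IH p3 u.
  - by move: Hs; rewrite size_cat /=; lia.
  - by move: Hp; rewrite cat_path /= => /and3P [_ _]; rewrite (@path_srel_start (finset.set0, u) b p3 ub).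
  - by move: Hl; rewrite last_cat /= (@last_srel (finset.set0, u) b p3 ub).
  exists l; split => //; apply: leq_trans Hl1 _.
  by rewrite size_cat /=; lia.
have [p1 [a [p2 [b [p3 [pE ab]]]]]] := dup_split Hd.
have [|||l [Hl1 Hl2]] := IH (p1 ++ a :: p3) u.
- by move: Hs; rewrite pE !size_cat /= !size_cat /=; lia.
- move: Hp; rewrite pE !cat_path /= cat_path /= => /and5P [-> -> _ _ H].
  by rewrite (@path_srel_start a b p3 ab).
- by move: Hl; rewrite pE !last_cat /= last_cat /= (@last_srel a b p3 ab).
exists l; split => //; apply: leq_trans Hl1 _.
by rewrite pE !size_cat /= !size_cat /=; lia.
Qed.

Lemma pos_sum (R : realDomainType) (I : finType) (P : pred I) (F : I -> R) :
  0 < \sum_(i | P i) F i -> exists i, P i /\ 0 < F i.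
Proof.
case: (pickP (fun i => P i && (0 < F i))) => [i /andP [? ?]|H]; first by exists i.
move=> Hs; exfalso; suff : \sum_(i | P i) F i <= 0 by move=> /(lt_le_trans Hs); rewrite ltxx.
by apply: sumr_le0 => i Pi; have := H i; rewrite Pi /= => /negbT; rewrite -leNgt.
Qed.

Lemma hadj_ge0 (R : realFieldType) (w v : 'I_n) : 0 <= hadj R E w v.
Proof.
rewrite mxE; case: (w == v) => //; apply: sumr_ge0 => e _; rewrite invr_ge0 ler0n //.
Qed.

Lemma pos_walk (R : realFieldType) t u v : 0 < ((hadj R E) ^+ t) u v ->
  exists p, [/\ size p = t, path srel (finset.set0, u) p & (last (finset.set0, u) p).2 = v].
Proof.
elim: t v => [|t IH] v.
  rewrite expr0 mxE; case: eqP => [<- _|]; last by rewrite ltxx.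
  by exists [::].
rewrite exprSr -mulmxE mxE => /pos_sum [w [_ Hw]].
have A0 := hadj_ge0 R w v.
have Apos : 0 < hadj R E w v.
  by rewrite lt_def A0 andbT; apply/negP => /eqP H; move: Hw; rewrite H mulr0 ltxx.
have /IH [p [sp pp lp]] : 0 < ((hadj R E) ^+ t) u w by move: Hw; rewrite pmulr_lgt0.
move: Apos; rewrite mxE; case: eqP => [_|wv]; first by rewrite ltxx.
move=> /pos_sum [e [/andP [eE /andP [we ve]] _]].
exists (rcons p (e, v)); split.
- by rewrite size_rcons sp.
- by rewrite rcons_path pp /srel /= eE lp we ve.
- by rewrite last_rcons.
Qed.

Lemma walk_hdist (R : realFieldType) t u v : 0 < ((hadj R E) ^+ t) u v ->
  (hdist E u v <= t)%N.
Proof.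
move=> /pos_walk [p [sp pp lp]].
have [l [l1 l2]] := walk_path pp lp.
by apply: leq_trans (hdist_le l2) _; rewrite -sp.
Qed.
End Walk.

Section Gen.
Variable C : numClosedFieldType.

Lemma char_poly_conj n (Q P M : 'M[C]_n) : Q *m P = 1%:M ->
  char_poly (Q *m M *m P) = char_poly M.
Proof.
move=> QP.
have QPp : map_mx polyC Q *m map_mx polyC P = 1%:M.
  by rewrite -map_mxM QP; apply/matrixP=> i j; rewrite !mxE; case: (i == j).
rewrite /char_poly.
have -> : char_poly_mx (Q *m M *m P) =
   map_mx polyC Q *m char_poly_mx M *m map_mx polyC P.
  rewrite /char_poly_mx !map_mxM mulmxBr mulmxBl mul_mx_scalar -scalemxAl QPp.
  by rewrite scalemx1.
rewrite !det_mulmx mulrAC -det_mulmx QPp det1 mul1r.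
by [].
Qed.
End Gen.

Section Gen2.
Variable C : numClosedFieldType.

Lemma amgm (a b : C) : 0 <= a -> 0 <= b -> a * b <= (a ^+ 2 + b ^+ 2) / 2%:R.
Proof.
move=> a0 b0.
have ra : a \is Num.real by apply: ger0_real.
have rb : b \is Num.real by apply: ger0_real.
have h : 0 <= (a - b) ^+ 2 by rewrite real_exprn_even_ge0 ?rpredB.
rewrite ler_pdivlMr ?ltr0n //.
rewrite -subr_ge0; have -> : a ^+ 2 + b ^+ 2 - a * b * 2%:R = (a - b) ^+ 2 by ring.
exact: h.
Qed.

Lemma count1 (T : eqType) (s : seq T) x : x \in s -> x \notin behead s ->
  count_mem x s = 1%N.
Proof.
case: s => [//|y s'] /=; rewrite in_cons => /orP [/eqP <- kb|H /negP //].
by rewrite eqxx (count_memPn kb).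
Qed.

Lemma mem_behead (T : eqType) (s : seq T) k x : k \in s -> k \notin behead s ->
  x \in s -> x != k -> x \in behead s.
Proof.
case: s => [//|y s'] /=; rewrite !in_cons => /orP [/eqP <-|H /negP //] _.
by case/orP => [/eqP -> |//]; rewrite eqxx.
Qed.

Lemma key n (A : 'M[C]_n) (s : seq C) (k : nat) (th : C) (t : nat) (u v : 'I_n) :
  A \is hermsymmx ->
  const_mx 1 *m A = k%:R *: (const_mx 1 : 'rV_n) ->
  char_poly A = \prod_(x <- s) ('X - x%:P) ->
  0 <= th -> th < k%:R ->
  (forall x, x \in behead s -> `|x| <= th) ->
  `|(A ^+ t) u v - k%:R ^+ t / n%:R| <= th ^+ t * (1 - n%:R^-1).
Proof.
move=> HA Hone Hchar th0 thk Hbeh.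
have n0 : (0 < n)%N := leq_ltn_trans (leq0n u) (ltn_ord u).
set P := spectralmx A; set d := spectral_diag A.
have /orthomx_spectralP AE := hermitian_normalmx HA.
have Pu : P \is unitarymx := spectral_unitarymx A.
set Q := P^t*.
have QE : invmx P = Q := invmx_unitary Pu.
rewrite -/P -/d QE in AE.
have PQ : P *m Q = 1%:M by apply/unitarymxP.
have QP : Q *m P = 1%:M by rewrite -QE mulVmx // spectral_unit.
have Qe : forall i j, Q i j = (P j i)^* by move=> i j; rewrite !mxE.
have AtE : forall t, A ^+ t = Q *m diag_mx (\row_j (d 0 j) ^+ t) *m P.
  elim=> [|m IH].
    rewrite expr0 (_ : \row_j _ = const_mx 1); last by apply/rowP=> j; rewrite !mxE.
    by rewrite diag_const_mx mulmx1 QP.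
  rewrite exprSr IH {1}AE -mulmxE !mulmxA -[Q *m _ *m P *m Q]mulmxA PQ mulmx1.
  rewrite -[Q *m _ *m diag_mx d]mulmxA mulmx_diag; congr (_ *m _ *m _).
  by congr diag_mx; apply/rowP=> j; rewrite !mxE exprSr.
have entry : (A ^+ t) u v = \sum_j Q u j * (d 0 j) ^+ t * P j v.
  by rewrite AtE mxE; apply: eq_bigr => j _; rewrite mul_mx_diag !mxE.
set r := (const_mx 1 : 'rV_n) *m Q.
have rD : forall j, r 0 j * d 0 j = k%:R * r 0 j.
  have : const_mx 1 *m A *m Q = k%:R *: (const_mx 1 : 'rV_n) *m Q by rewrite Hone.
  rewrite {1}AE !mulmxA -[_ *m P *m Q]mulmxA PQ mulmx1 -scalemxAl -/r => /rowP H j.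
  by have := H j; rewrite mul_mx_diag !mxE.
have rP : r *m P = const_mx 1 by rewrite -mulmxA QP mulmx1.
have rdef0 : forall j, r 0 j = \sum_w Q w j.
  by move=> j; rewrite mxE; apply: eq_bigr => w _; rewrite mxE mul1r.
clearbody r.
set ds := [seq d 0 i | i <- enum 'I_n].
have Hperm : perm_eq s ds.
  apply: prod_XsubC_eq; rewrite -Hchar {1}AE char_poly_conj // char_poly_trig ?diag_mx_is_trig //.
  rewrite big_map big_enum /=; apply: eq_bigr => i _; by rewrite mxE eqxx mulr1n.
have ks : k%:R \in s.
  rewrite -root_prod_XsubC -Hchar -eigenvalue_root_char; apply/eigenvalueP.
  exists (const_mx 1) => //; apply/eqP => /rowP/(_ (Ordinal n0)); rewrite !mxE => /eqP.
  by rewrite oner_eq0.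
have kb : k%:R \notin behead s.
  by apply/negP => /Hbeh; rewrite normr_nat => /(lt_le_trans thk); rewrite ltxx.
have cnt : count_mem (k%:R : C) s = 1%N.
  exact: count1 ks kb.
have cntd : #|[pred i | d 0 i == k%:R]| = 1%N.
  rewrite cardE /enum_mem size_filter; apply: etrans cnt.
  rewrite (permP Hperm) count_map.
  by rewrite enumT; apply: eq_count => i /=.
have [j0 Hj0] : exists j0, [pred i | d 0 i == k%:R] =i pred1 j0 by apply/card1P; rewrite cntd.
have dk : forall j, (d 0 j == k%:R) = (j == j0) by move=> j; have := Hj0 j; rewrite !inE.
have dj0 : d 0 j0 = k%:R by apply/eqP; rewrite dk.
have dother : forall j, j != j0 -> `|d 0 j| <= th.
  move=> j jn; apply: Hbeh; apply: (mem_behead ks kb); last by rewrite dk.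
  by rewrite (perm_mem Hperm); apply: map_f; rewrite mem_enum.
have rj : forall j, j != j0 -> r 0 j = 0.
  move=> j jn; have := rD j; move/eqP; rewrite [k%:R * _]mulrC -subr_eq0 -mulrBr mulf_eq0 subr_eq0 dk.
  by rewrite (negPf jn) orbF => /eqP.
have rj0P : forall w, r 0 j0 * P j0 w = 1.
  move=> w; have /rowP/(_ w) := rP; rewrite !mxE (bigD1 j0) //= big1 ?addr0 //.
  by move=> j jn; rewrite rj // mul0r.
have rdef := rdef0 j0.
have rconj : (r 0 j0)^* = \sum_w P j0 w.
  rewrite rdef rmorph_sum; apply: eq_bigr => w _; rewrite Qe; exact: conjCK.
have rn : r 0 j0 * (r 0 j0)^* = n%:R.
  rewrite rconj mulr_sumr (eq_bigr (fun _ => 1)); last by move=> w _; rewrite rj0P.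
  by rewrite sumr_const card_ord.
have rnz : r 0 j0 != 0 by apply/negP => /eqP r0; have := rj0P u; rewrite r0 mul0r => /eqP; rewrite eq_sym oner_eq0.
have Pj0 : forall w, P j0 w = (r 0 j0)^-1.
  by move=> w; rewrite -[P j0 w](mulKf rnz) rj0P mulr1.
have Qj0 : forall w, Q w j0 = ((r 0 j0)^-1)^* by move=> w; rewrite Qe Pj0.
have prodj0 : forall a b, Q a j0 * P j0 b = n%:R^-1.
  by move=> a b; rewrite Qj0 Pj0 fmorphV -invfM mulrC rn.
have sQ : \sum_j `|Q u j| ^+ 2 = 1.
  transitivity ((Q *m P) u u); last by rewrite QP mxE eqxx.
  rewrite mxE; apply: eq_bigr => j _; rewrite normCK; congr (_ * _).
  by rewrite Qe; exact: conjCK.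
have sP : \sum_j `|P j v| ^+ 2 = 1.
  transitivity ((Q *m P) v v); last by rewrite QP mxE eqxx.
  rewrite mxE; apply: eq_bigr => j _; rewrite normCK mulrC; congr (_ * _).
  by rewrite Qe.
have nQ : `|Q u j0| ^+ 2 = n%:R^-1.
  rewrite normCK -(prodj0 u u); congr (_ * _); rewrite Qe; exact: conjCK.
have nP : `|P j0 v| ^+ 2 = n%:R^-1.
  by rewrite normCK -(prodj0 v v) mulrC Qe.
have sQ' : \sum_(j | j != j0) `|Q u j| ^+ 2 = 1 - n%:R^-1.
  by move: sQ; rewrite [in X in X -> _](bigD1 j0) //= nQ => /(congr1 (fun x => x - n%:R^-1)) <-; rewrite addrAC subrr add0r.
have sP' : \sum_(j | j != j0) `|P j v| ^+ 2 = 1 - n%:R^-1.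
  by move: sP; rewrite [in X in X -> _](bigD1 j0) //= nP => /(congr1 (fun x => x - n%:R^-1)) <-; rewrite addrAC subrr add0r.
rewrite entry (bigD1 j0) //= dj0 -mulrA [k%:R ^+ t * P j0 v]mulrC mulrA prodj0.
set S := \sum_(j | j != j0) _.
have -> : n%:R^-1 * k%:R ^+ t + S - k%:R ^+ t / n%:R = S.
  by rewrite mulrC addrAC subrr add0r.
apply: le_trans (ler_norm_sum _ _ _) _.
apply: (@le_trans _ _ (\sum_(j | j != j0) th ^+ t * ((`|Q u j| ^+ 2 + `|P j v| ^+ 2) / 2%:R))).
  apply: ler_sum => j jn; rewrite !normrM normrX mulrAC mulrC.
  apply: ler_pM; rewrite ?exprn_ge0 ?mulr_ge0 ?normr_ge0 //.
    by apply: lerXn2r; rewrite ?nnegrE ?normr_ge0 ?dother.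
  exact: amgm.
rewrite -mulr_sumr -mulr_suml big_split /= sQ' sP'.
set a := 1 - n%:R^-1.
have -> : (a + a) / 2%:R = a.
  by field.
by [].
Qed.
End Gen2.

Lemma numeric (R : realType) (n k : nat) (th : R) : 0 <= th -> th < k%:R ->
  exists t : nat, (t%:Z <= Num.floor (1 + ln (n%:R - 1) / ln (k%:R / th)))%R /\
    (n%:R - 1) * th ^+ t < k%:R ^+ t.
Proof.
move=> th0 thk; have k0 : 0 < k%:R :> R by apply: le_lt_trans thk.
case: (leqP n 1) => [n1|n2].
  exists 1%N; rewrite (@ln0 _ (n%:R - 1)); last by rewrite subr_le0 lern1.
  rewrite mul0r addr0 floor1; split => //.
  rewrite expr1 expr1; apply: le_lt_trans k0.
  by apply: mulr_le0_ge0 => //; rewrite subr_le0 lern1.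
have [->|thn0] := eqVneq th 0.
  exists 1%N; have -> : k%:R / 0 = 0 :> R by rewrite invr0 mulr0.
  rewrite (@ln0 _ 0) //.
  have -> : ln (n%:R - 1) / 0 = 0 :> R by rewrite invr0 mulr0.
  rewrite addr0 floor1; split => //.
  by rewrite !expr1 mulr0.
have thp : 0 < th by rewrite lt_def thn0 th0.
have q1 : 1 < k%:R / th by rewrite ltr_pdivlMr // mul1r.
have L0 : 0 < ln (k%:R / th) by apply: ln_gt0.
have n1 : 1 <= n%:R - 1 :> R by rewrite lerBrDr (_ : 1 + 1 = 2%:R) // ler_nat.
have x0 : 0 <= ln (n%:R - 1) / ln (k%:R / th) :> R.
  by apply: divr_ge0; [exact: ln_ge0 | exact: ltW].
set x := ln (n%:R - 1) / ln (k%:R / th).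
set T := Num.floor (1 + x).
have T0 : 0 <= T by rewrite floor_ge_int /= ?addr_ge0.
have HT : 1 + x < (T + 1)%:~R by apply: floorD1_gt.
have xT : x < T%:~R by move: HT; rewrite intrD addrC ltrD2r.
set t := `|T|%N.
have Tt : T = t%:Z by rewrite gez0_abs.
exists t; rewrite -Tt; split => //.
have tR : (t%:Z)%:~R = t%:R :> R by [].
move: xT; rewrite Tt tR ltr_pdivrMr // (mulr_natl (ln _) t) -lnXn ?(lt_trans ltr01 q1) //.
rewrite ltr_ln ?posrE ?exprn_gt0 ?(lt_trans ltr01 q1) ?(lt_le_trans ltr01 n1) //.
by rewrite expr_div_n ltr_pdivlMr // exprn_gt0.
Qed.

Section Glue.

Lemma hadj_map (F F' : numFieldType) (f : {rmorphism F -> F'}) n (E : {set {set 'I_n}}) :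
  map_mx f (hadj F E) = hadj F' E.
Proof.
apply/matrixP => i j; rewrite !mxE; case: (i == j); first by rewrite rmorph0.
by rewrite rmorph_sum; apply: eq_bigr => e _; rewrite fmorphV rmorph_nat.
Qed.

Lemma hadj_sym (F : numFieldType) n (E : {set {set 'I_n}}) : (hadj F E)^T = hadj F E.
Proof.
apply/matrixP => i j; rewrite !mxE [j == i]eq_sym; case: (i == j) => //.
by apply: eq_bigl => e; rewrite [(j \in e) && _]andbC.
Qed.

Lemma hadj_herm (C : numClosedFieldType) n (E : {set {set 'I_n}}) :
  hadj C E \is hermsymmx.
Proof.
apply/is_hermitianmxP; rewrite expr0 scale1r hadj_sym.
by rewrite hadj_map.
Qed.

Lemma hadj_rowsum (F : numFieldType) n (E : {set {set 'I_n}}) k :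
  edges_ok E -> regular E k ->
  const_mx 1 *m hadj F E = k%:R *: (const_mx 1 : 'rV_n).
Proof.
move=> Hok Hreg; apply/rowP => j; rewrite !mxE.
under eq_bigr do rewrite !mxE mul1r.
set w := fun e : {set 'I_n} => (#|e|.-1)%:R^-1 : F.
have step1 : forall i, (if i == j then 0 else \sum_(e in E | (i \in e) && (j \in e)) w e)
   = \sum_e (if [&& e \in E, i \in e, j \in e & i != j] then w e else 0).
  move=> i; rewrite big_mkcond /=; case: eqP => [->|/eqP ij].
    by rewrite big1 // => e _; rewrite !andbF.
  by apply: eq_bigr => e _; rewrite !andbT.
under eq_bigr => i _ do rewrite step1.
rewrite exchange_big /= mulr1.
transitivity (\sum_(e in E | j \in e) (1 : F)); last first.
  rewrite sumr_const -(Hreg j) /hdegree; congr (_%:R); apply: eq_card => e.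
  by rewrite !inE.
rewrite [RHS]big_mkcond /=; apply: eq_bigr => e _.
case Ee : (e \in E) => /=; last by rewrite big1.
case je : (j \in e) => /=; last by rewrite big1 // => i _; rewrite !andbF.
rewrite -big_mkcond /= sumr_const.
have c : #|[pred i | (i \in e) && (i != j)]| = #|e|.-1.
  rewrite (cardD1 j e) je /= add0n; apply: eq_card => i; rewrite !inE andbC.
  by [].
have e2 := Hok e Ee.
rewrite c /w -(mulr_natr ((#|e|.-1)%:R^-1) #|e|.-1) mulVf // pnatr_eq0; move: e2; case: #|e| => [|[|m]] //.
Qed.

Lemma map_mxXn (F F' : numFieldType) (f : {rmorphism F -> F'}) n (A : 'M[F]_n) t :
  map_mx f (A ^+ t) = (map_mx f A) ^+ t.
Proof.
elim: t => [|t IH]; first by rewrite !expr0 map_mx1.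
by rewrite !exprSr -!mulmxE map_mxM IH.
Qed.

End Glue.
Local Open Scope complex_scope.
Local Open Scope ring_scope.

Lemma normC_real (R : rcfType) (x : R) : `|x%:C| = `|x|%:C.
Proof. by rewrite normc_def /= expr0n /= addr0 sqrtr_sqr. Qed.

Theorem corollary1 (R : realType) (n k : nat) (E : {set {set 'I_n}})
  (s : seq R) :
  edges_ok E -> regular E k -> hconnected E ->
  (* s = lambda_1 >= ... >= lambda_n, the eigenvalues of A_G with multiplicity *)
  size s = n -> sorted (fun x y => y <= x) s ->
  char_poly (hadj R E) = \prod_(x <- s) ('X - x%:P) ->
  let theta := \big[Num.max/0]_(x <- behead s) `|x| in
  theta < k%:R ->
  ((hdiam E)%:Z <= Num.floor (1 + ln (n%:R - 1) / ln (k%:R / theta)))%R.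
Proof.
move=> Hok Hreg _ Hsize _ Hchar theta Hth.
have th0 : 0 <= theta.
  rewrite /theta; elim/big_ind: _ => //.
    by move=> x y hx hy; rewrite le_max hx.
have [t [Tt Ht]] := numeric n th0 Hth.
suff Hd : (hdiam E <= t)%N.
  by apply: (@le_trans _ _ (t%:Z)) => //; rewrite lez_nat.
apply/bigmax_leqP => u _; apply/bigmax_leqP => v _.
apply: (walk_hdist (R := R)).
have n0 : (0 < n)%N := leq_ltn_trans (leq0n u) (ltn_ord u).
have Hchar' : char_poly (hadj R[i] E) = \prod_(x <- map (real_complex R) s) ('X - x%:P).
  rewrite -(hadj_map (real_complex R)) -map_char_poly Hchar rmorph_prod big_map.
  by apply: eq_bigr => x _; rewrite /= map_polyXsubC.
have th0' : 0 <= theta%:C by rewrite lecR.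
have kC : (k%:R : R)%:C = k%:R := rmorph_nat _ _.
have nC : (n%:R : R)%:C = n%:R := rmorph_nat _ _.
have thk' : theta%:C < k%:R by rewrite -kC ltcR.
have Hbeh : forall x, x \in behead (map (real_complex R) s) -> `|x| <= theta%:C.
  move=> x; rewrite behead_map => /mapP [y ys ->]; rewrite normC_real lecR.
  by rewrite /theta; apply: le_bigmax_seq.
have := key t u v (hadj_herm R[i] E) (hadj_rowsum R[i] Hok Hreg) Hchar' th0' thk' Hbeh.
have E1 : forall a b c : R, (a - b ^+ t / c)%:C = a%:C - b%:C ^+ t / c%:C.
  by move=> a b c; rewrite rmorphB rmorphM rmorphXn fmorphV.
have E2 : forall b c : R, (b ^+ t * (1 - c^-1))%:C = b%:C ^+ t * (1 - c%:C^-1).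
  by move=> b c; rewrite rmorphM rmorphXn rmorphB rmorph1 fmorphV.
rewrite -(hadj_map (real_complex R)) -map_mxXn mxE -kC -nC -E1 -E2.
rewrite normC_real lecR ler_distl => /andP [H1 _].
apply: lt_le_trans H1.
have nz : n%:R != 0 :> R by rewrite pnatr_eq0 -lt0n.
have -> : k%:R ^+ t / n%:R - theta ^+ t * (1 - n%:R^-1) = (k%:R ^+ t - (n%:R - 1) * theta ^+ t) / n%:R :> R.
  by field.
by rewrite divr_gt0 ?ltr0n // subr_gt0.
Qed.
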